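(* Let $k$ be a positive integer, $V$ a finite-dimensional complex vector space, and $P_1,\dots,P_k$ pairwise commuting operators on $V$ each of order at most $2$ (i.e. $P_i^2=\mathrm{id}$). For $\varepsilon=(\varepsilon_1,\dots,\varepsilon_k)\in\{\pm1\}^k$ let $V_\varepsilon=\prod_{i=1}^k(1+\varepsilon_iP_i)V$. Let $A$ be an operator on $V$ commuting with $P_1,\dots,P_k$, and for $\varepsilon\in\{\pm1\}^k$ let $\mathcal E_{\varepsilon,+}$ (resp. $\mathcal E_{\varepsilon,-}$) be the multiset of positive (resp. negative) characteristic roots of $A|_{V_\varepsilon}:V_\varepsilon\to V_\varepsilon$. If the spectrum of $A$ coincides with the spectrum of $(\prod_{i\in I}P_i)A$ for every nonempty subset $I\subseteq\{1,\dots,k\}$, then $\mathcal E_{\varepsilon,+}=-\mathcal E_{\varepsilon,-}$ for every $\varepsilon\ne(1,1,\dots,1)$, and the spectrum of $A$ contains a sub-multiset of size $\dim V-\dim V_{(1,1,\dots,1)}$ which is symmetric about the origin.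
   Context: The spectrum of an operator is its multiset of characteristic roots (eigenvalues with algebraic multiplicity). A multiset $M$ of complex numbers is symmetric about the origin if $M=-M$. *)

(* Defs.v *)
From mathcomp Require Import all_boot all_order all_algebra all_field.
Set Implicit Arguments. Unset Strict Implicit. Unset Printing Implicit Defensive.
Import Order.TTheory GRing.Theory Num.Theory.
Local Open Scope ring_scope.

(* V = 'rV[algC]_n (complex vector space of dimension n); operators are
   matrices acting on row vectors (v |-> v *m A).  algC = algebraic complex
   numbers (algebraically closed, characteristic 0, with the usual
   partial order: 0 < x iff x is a positive real). *)

Definition spec_mult (m : nat) (A : 'M[algC]_m) (x : algC) : nat :=
  mup x (char_poly A).

(* Matrix (w.r.t. the basis row_base W of the row space of W) of the
   restriction of A to the subspace W (meaningful when W is A-stable). *)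
Definition restrict_mx (n : nat) (W A : 'M[algC]_n) : 'M[algC]_(\rank W) :=
  row_base W *m A *m pinvmx (row_base W).

(* The projector prod_i (1 + eps_i P_i); V_eps is its image (row space). *)
Definition proj_eps (n k : nat) (P : 'I_k -> 'M[algC]_n) (eps : 'I_k -> algC)
  : 'M[algC]_n := \prod_(i < k) (1%:M + eps i *: P i).

Definition pos_roots (n : nat) (W A : 'M[algC]_n) (x : algC) : nat :=
  if 0 < x then spec_mult (restrict_mx W A) x else 0%N.
Definition neg_roots (n : nat) (W A : 'M[algC]_n) (x : algC) : nat :=
  if x < 0 then spec_mult (restrict_mx W A) x else 0%N.

(* Main.v *)
Require Import Defs.
From mathcomp Require Import all_boot all_order all_algebra all_field.
Import Order.TTheory GRing.Theory Num.Theory.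
Local Open Scope ring_scope.
Set Implicit Arguments. Unset Strict Implicit. Unset Printing Implicit Defensive.
Section Gen.
Variable F : fieldType.

Lemma char_poly_sim m1 m2 (B : 'M[F]_(m1, m2)) (M : 'M[F]_m2) (D : 'M[F]_m1) :
  m1 = m2 -> row_free B -> B *m M = D *m B -> char_poly M = char_poly D.
Proof.
move=> e; subst m2 => rf BM.
have uB : B \in unitmx by rewrite -row_free_unit.
have -> : D = B *m M *m invmx B by rewrite BM -mulmxA mulmxV ?mulmx1.
rewrite /char_poly /char_poly_mx.
have e1 : map_mx polyC B *m map_mx polyC (invmx B) = 1%:M.
  by rewrite -map_mxM mulmxV // map_mx1.
have -> : 'X%:M - map_mx polyC (B *m M *m invmx B) =
   map_mx polyC B *m ('X%:M - map_mx polyC M) *m map_mx polyC (invmx B).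
  rewrite mulmxBr mulmxBl scalar_mxC -[in X in _ = X - _]mulmxA -map_mxM mulmxV // map_mx1 mulmx1 -!map_mxM.
  by [].
rewrite !det_mulmx mulrAC -det_mulmx -map_mxM mulmxV // map_mx1 det1 mul1r.
by [].
Qed.

Lemma char_poly_block m1 m2 (R1 : 'M[F]_m1) (R2 : 'M[F]_m2) :
  char_poly (block_mx R1 0 0 R2) = char_poly R1 * char_poly R2.
Proof. by rewrite /char_poly char_block_diag_mx det_ublock. Qed.

Lemma char_poly0 m (M : 'M[F]_m) : m = 0%N -> char_poly M = 1.
Proof. by move=> e; subst m; rewrite /char_poly det_mx00. Qed.

Lemma cp_split n (A : 'M[F]_n) m1 m2 (U1 : 'M[F]_(m1, n)) (U2 : 'M[F]_(m2, n)) :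
  stablemx U1 A -> stablemx U2 A -> (U1 :&: U2)%MS = 0 ->
  char_poly (conjmx (row_base (U1 + U2)%MS) A) =
  char_poly (conjmx (row_base U1) A) * char_poly (conjmx (row_base U2) A).
Proof.
move=> s1 s2 cap0.
set rb1 := row_base U1; set rb2 := row_base U2; set W := row_base (U1 + U2)%MS.
have h1 : rb1 *m A = conjmx rb1 A *m rb1.
  by rewrite /conjmx mulmxKpV // stablemx_row_base.
have h2 : rb2 *m A = conjmx rb2 A *m rb2.
  by rewrite /conjmx mulmxKpV // stablemx_row_base.
set B0 := col_mx rb1 rb2.
have hB0 : B0 *m A = block_mx (conjmx rb1 A) 0 0 (conjmx rb2 A) *m B0.
  by rewrite mul_col_mx mul_block_col !mul0mx addr0 add0r -h1 -h2.
have sB0 : (B0 <= W)%MS.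
  by rewrite /W eq_row_base col_mx_sub /rb1 /rb2 !eq_row_base addsmxSl addsmxSr.
rewrite -char_poly_block.
apply: (@char_poly_sim _ _ (B0 *m pinvmx W)).
- by rewrite mxrank_disjoint_sum.
- rewrite /row_free eqn_leq rank_leq_row /=.
  have rB0 : \rank B0 = (\rank U1 + \rank U2)%N.
    rewrite /B0 -addsmxE (adds_eqmx (eq_row_base U1) (eq_row_base U2)).
    by rewrite mxrank_disjoint_sum.
  by rewrite -{1}rB0 -{1}(mulmxKpV sB0) mxrankM_maxl.
- have -> : conjmx W A = W *m A *m pinvmx W by [].
  by rewrite 2!mulmxA (mulmxKpV sB0) hB0 mulmxA.
Qed.
End Gen.
Section Fam.
Variables (F : fieldType) (n : nat) (I : eqType) (E : I -> 'M[F]_n) (c : F) (A : 'M[F]_n).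
Hypothesis hc : c != 0.
Hypothesis horth : forall i j, i != j -> E i *m E j = 0.
Hypothesis hsq : forall i, E i *m E i = c *: E i.
Hypothesis hst : forall i, stablemx (E i) A.

Lemma fam_split (s : seq I) : uniq s ->
  char_poly (conjmx (row_base (\sum_(i <- s) E i)%MS) A)
    = \prod_(i <- s) char_poly (conjmx (row_base (E i)) A)
  /\ \rank (\sum_(i <- s) E i)%MS = \sum_(i <- s) \rank (E i).
Proof.
elim: s => [|i s IH] /=.
  by rewrite !big_nil; split; [apply: char_poly0; exact: mxrank0 | exact: mxrank0].
move/andP => [nis us]; have [IH1 IH2] := IH us; rewrite !big_cons.
set S := (\sum_(j <- s) E j)%MS.
have stS : stablemx S A.
  by rewrite /S; apply: (big_ind (fun X : 'M_n => stablemx X A)) => [|X Y hX hY|j _]; [exact: stable0mx | exact: stableDmx | exact: hst].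
have SK : (S <= kermx (E i))%MS.
  rewrite /S big_seq; apply: (big_ind (fun X : 'M_n => (X <= kermx (E i))%MS)) => [|X Y hX hY|j js]; first exact: sub0mx.
    by rewrite addsmx_sub hX hY.
  by apply/sub_kermxP; apply: horth; apply: contraNneq nis => <-.
have capS : (E i :&: S)%MS = 0.
  set C := (E i :&: S)%MS.
  have C0 : C *m E i = 0 by apply/sub_kermxP; exact: submx_trans (capmxSr _ _) SK.
  have /submxP[D hD] : (C <= E i)%MS := capmxSl _ _.
  have : c *: C = 0 by rewrite hD scalemxAr -hsq mulmxA -hD C0.
  by move/eqP; rewrite scalemx_eq0 (negPf hc) /= => /eqP.
split; first by rewrite cp_split // IH1.
by rewrite mxrank_disjoint_sum // IH2.
Qed.
End Fam.
Section Spec.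
Variables (k n : nat) (P : 'I_k -> 'M[algC]_n).
Hypothesis hPc : forall i j, P i *m P j = P j *m P i.
Hypothesis hPP : forall i, P i *m P i = 1%:M.

Definition sgn (b : bool) : algC := if b then 1 else -1.
Definition E (f : {ffun 'I_k -> bool}) : 'M[algC]_n := proj_eps P (fun i => sgn (f i)).

Lemma sgn2 b : sgn b * sgn b = 1.
Proof. by case: b; rewrite /= ?mulr1 ?mulrNN ?mulr1. Qed.

Lemma eig_prod (J : Type) (X : 'M[algC]_n) (r : seq J) (Pr : pred J)
   (G : J -> 'M[algC]_n) (t : J -> algC) :
  (forall j, X * G j = t j *: X) ->
  X * (\prod_(j <- r | Pr j) G j) = (\prod_(j <- r | Pr j) t j) *: X.
Proof.
move=> h; apply: (big_rec2 (fun a Y => X * Y = a *: X)) => [|j a Y _ IH].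
  by rewrite mulr1 scale1r.
by rewrite mulrA h -!mulmxE -scalemxAl mulmxE IH scalerA.
Qed.

Lemma comm_factor i j c : GRing.comm (P i) (1 + c *: P j).
Proof.
rewrite /GRing.comm mulrDr mulrDl mulr1 mul1r -!mulmxE -scalemxAr -scalemxAl.
by rewrite hPc.
Qed.

Lemma prod_eigP (r : seq 'I_k) (G : 'I_k -> 'M[algC]_n) i t :
  i \in r -> (forall j, GRing.comm (P i) (G j)) -> G i * P i = t *: G i ->
  (\prod_(j <- r) G j) * P i = t *: \prod_(j <- r) G j.
Proof.
move=> + hc hG; elim: r => // j r IH; rewrite inE big_cons.
case: (eqVneq i j) => [<- _|_ /= ir].
  rewrite -mulrA -(commr_prod r (fun j _ => hc j)) mulrA hG.
  by rewrite -!mulmxE -scalemxAl.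
by rewrite -mulrA IH // -!mulmxE scalemxAr.
Qed.

Lemma EP f i : E f *m P i = sgn (f i) *: E f.
Proof.
rewrite mulmxE /E /proj_eps; apply: prod_eigP; first exact: mem_index_enum.
  by move=> j; apply: comm_factor.
rewrite mulrDl mul1r -!mulmxE -scalemxAl hPP scalerDr.

by rewrite scalerA sgn2 scale1r addrC.
Qed.
End Spec.
Lemma full_cp (F : fieldType) n (B S : 'M[F]_n) :
  row_full S -> stablemx S B -> char_poly B = char_poly (conjmx (row_base S) B).
Proof.
move=> fS sS; apply: (@char_poly_sim _ _ _ (row_base S)).
- by apply/eqP.
- exact: row_base_free.
- by rewrite /conjmx mulmxKpV // stablemx_row_base.
Qed.

Section Spec2.
Variables (k n : nat) (P : 'I_k -> 'M[algC]_n).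
Hypothesis hPc : forall i j, P i *m P j = P j *m P i.
Hypothesis hPP : forall i, P i *m P i = 1%:M.
Local Notation E := (E P).

Lemma EE f g : E f *m E g = (\prod_(j < k) (1 + sgn (g j) * sgn (f j))) *: E f.
Proof.
rewrite mulmxE /E /proj_eps; apply: eig_prod => j.
rewrite mulrDr mulr1 -!mulmxE -scalemxAr.
have := EP hPc hPP f j; rewrite /E /proj_eps => ->.
by rewrite scalerA scalerDl scale1r.
Qed.

Lemma Eorth f g : f != g -> E f *m E g = 0.
Proof.
move=> fg; rewrite EE.
have [j hj] : exists j, f j != g j.
  case/boolP: [exists j, f j != g j] => [/existsP[j hj]|]; first by exists j.
  rewrite negb_exists => /forallP H; case/eqP: fg; apply/ffunP => j.
  by move: (H j); rewrite negbK => /eqP.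
rewrite (bigD1 j) //=.
have -> : 1 + sgn (g j) * sgn (f j) = 0.
  move: hj; case: (f j); case: (g j) => //= _; rewrite /sgn ?mulr1 ?mul1r ?subrr //.
by rewrite mul0r scale0r.
Qed.

Lemma Esq f : E f *m E f = 2 ^+ k *: E f.
Proof.
rewrite EE; congr (_ *: _).
by rewrite (eq_bigr (fun _ => 2)) ?prodr_const ?card_ord // => j _; rewrite sgn2.
Qed.

Lemma Ecomm (B : 'M[algC]_n) f : (forall i, B *m P i = P i *m B) ->
  E f *m B = B *m E f.
Proof.
move=> hB; rewrite mulmxE /E /proj_eps; symmetry; apply: commr_prod => j _.
rewrite /GRing.comm mulrDr mulrDl mulr1 mul1r -!mulmxE -scalemxAr -scalemxAl.
by rewrite hB.
Qed.

Lemma Esum : \sum_(f : {ffun 'I_k -> bool}) E f = (2 ^+ k)%:M.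
Proof.
rewrite /E /proj_eps.
have := @bigA_distr_bigA _ 0 1 *%R +%R _ _ (fun (i : 'I_k) (b : bool) => 1%:M + sgn b *: P i).
move=> <-.
rewrite (eq_bigr (fun _ => 2%:M)); last first.
  move=> i _; rewrite big_bool /= scale1r scaleN1r addrACA subrr addr0.
  by rewrite -[2%:M]scalemx1 scaler_nat mulr2n.
rewrite big_const_ord.
have h : forall m, iter m ( *%R (2%:M : 'M[algC]_n)) 1 = (2 ^+ m)%:M.
  elim => [|m IH]; first by rewrite expr0.
  by rewrite exprS /= IH -mulmxE -scalar_mxM.
exact: h.
Qed.
End Spec2.
Section Spec3.
Variables (k n : nat) (P : 'I_k -> 'M[algC]_n).
Hypothesis hPc : forall i j, P i *m P j = P j *m P i.
Hypothesis hPP : forall i, P i *m P i = 1%:M.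

Lemma two_k_neq0 : (2 ^+ k : algC) != 0.
Proof. by rewrite expf_neq0 // pnatr_eq0. Qed.

Lemma fam_full (B : 'M[algC]_n) : (forall i, B *m P i = P i *m B) ->
  char_poly (conjmx (row_base (\sum_(f <- index_enum {ffun 'I_k -> bool}) E P f)%MS) B)
    = \prod_(f <- index_enum {ffun 'I_k -> bool}) char_poly (conjmx (row_base (E P f)) B)
  /\ \rank (\sum_(f <- index_enum {ffun 'I_k -> bool}) E P f)%MS
     = \sum_(f <- index_enum {ffun 'I_k -> bool}) \rank (E P f).
Proof.
move=> hB.
have hst : forall f, stablemx (E P f) B by move=> f; rewrite Ecomm // submxMl.
exact: (@fam_split _ _ _ (E P) (2 ^+ k) B two_k_neq0 (@Eorth _ _ P hPc hPP)
          (@Esq _ _ P hPc hPP) hst _ (index_enum_uniq _)).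
Qed.

Lemma sum_full : row_full (\sum_(f <- index_enum {ffun 'I_k -> bool}) E P f)%MS.
Proof.
rewrite -sub1mx.
have -> : (1%:M : 'M[algC]_n) = (2 ^+ k)^-1 *: \sum_(f : {ffun 'I_k -> bool}) E P f.
  by rewrite Esum // scale_scalar_mx mulVf // two_k_neq0.
apply: scalemx_sub; apply: summx_sub => f _.
exact: (@sumsmx_sup _ _ f).
Qed.

Lemma decomp (B : 'M[algC]_n) : (forall i, B *m P i = P i *m B) ->
  char_poly B = \prod_(f : {ffun 'I_k -> bool}) char_poly (restrict_mx (E P f) B).
Proof.
move=> hB; have [h1 _] := fam_full hB.
have hst : forall f, stablemx (E P f) B by move=> f; rewrite Ecomm // submxMl.
transitivity (char_poly (conjmx (row_base (\sum_(f <- index_enum {ffun 'I_k -> bool}) E P f)%MS) B)); last exact: h1.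
apply: full_cp; first exact: sum_full.
exact: stablemx_sums.
Qed.

Lemma rank_sum : \sum_(f : {ffun 'I_k -> bool}) \rank (E P f) = n.
Proof.
have [_ h2] := @fam_full 1%:M (fun i => etrans (mul1mx _) (esym (mulmx1 _))).
rewrite -h2; apply/eqP; exact: sum_full.
Qed.
End Spec3.
Lemma prod_const_seq (R : comPzRingType) (T : Type) (r : seq T) (c : R) :
  \prod_(z <- r) c = c ^+ size r.
Proof. by elim: r => [|z r IH]; rewrite ?big_nil ?expr0 // big_cons IH exprS. Qed.

Lemma cp_roots m (R : 'M[algC]_m) :
  exists r : seq algC, char_poly R = \prod_(z <- r) ('X - z%:P) /\ size r = m.
Proof.
have [r hr] := closed_field_poly_normal (char_poly R).
rewrite (monicP (char_poly_monic R)) scale1r in hr.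
exists r; split => //.
by have := size_char_poly R; rewrite hr size_prod_XsubC => -[].
Qed.

Lemma char_polyN_comp m (R : 'M[algC]_m) :
  char_poly R \Po (- 'X) = (-1) ^+ m * char_poly (- R).
Proof.
rewrite /char_poly -det_map_mx -mulN1r -detZ; congr (\det _).
apply/matrixP => i j; rewrite !mxE.
rewrite rmorphB /= rmorphMn /= comp_polyX comp_polyC.
by rewrite mulr1 mulN1r polyCN opprK opprD mulNrn.
Qed.

Lemma mup_neg m (R : 'M[algC]_m) x :
  mup x (char_poly (- R)) = mup (- x) (char_poly R).
Proof.
have [r [hr sr]] := cp_roots R.
have e : char_poly (- R) = \prod_(z <- map -%R r) ('X - z%:P).
  have := char_polyN_comp R; rewrite hr rmorph_prod /=.
  under eq_bigr do rewrite rmorphB /= comp_polyX comp_polyC -opprD -mulN1r.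
  rewrite big_split /= prod_const_seq sr => /(congr1 (fun p => (-1) ^+ m * p)).
  rewrite !mulrA -exprMn mulrNN mulr1 expr1n !mul1r => <-.
  by rewrite big_map; apply: eq_bigr => z _; rewrite polyCN opprK.
rewrite e hr !mu_prod_XsubC count_map; apply: eq_count => z /=.
by rewrite eqr_oppLR.
Qed.
Section Fourier.
Variable k : nat.
Definition chi (I : {set 'I_k}) (f : {ffun 'I_k -> bool}) : algC :=
  \prod_(i in I) sgn (f i).

Lemma subset_sum (a : 'I_k -> algC) :
  \sum_(I : {set 'I_k}) \prod_(i in I) a i = \prod_(i < k) (1 + a i).
Proof.
have -> : \prod_(i < k) (1 + a i) =
    \prod_(i < k) \sum_(b : bool) (if b then a i else 1).
  by apply: eq_bigr => i _; rewrite big_bool /= addrC.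
have := @bigA_distr_bigA _ 0 1 *%R +%R _ _ (fun (i : 'I_k) (b : bool) => if b then a i else 1).
move=> ->.
rewrite (reindex (fun F : {ffun 'I_k -> bool} => [set i | F i])) /=; last first.
  exists (fun I : {set 'I_k} => [ffun i => i \in I]) => F _.
    by apply/ffunP => i; rewrite ffunE inE.
  by apply/setP => i; rewrite inE ffunE.
apply: eq_bigr => F _; rewrite big_mkcond; apply: eq_bigr => i _; rewrite inE.
by [].
Qed.

Lemma prod_zero (a : 'I_k -> algC) j : a j = 0 -> \prod_(i < k) a i = 0.
Proof. by move=> aj; rewrite (bigD1 j) //= aj mul0r. Qed.

Lemma chi_pm I f : chi I f = 1 \/ chi I f = -1.
Proof.
apply: (big_ind (fun a : algC => a = 1 \/ a = -1)); first by left.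
  by move=> a b [->|->] [->|->]; rewrite ?mulr1 ?mul1r ?mulrNN ?mulr1; auto.
by move=> i _; case: (f i); [left|right].
Qed.

Lemma chi_sum0 f0 : f0 != [ffun => true] -> \sum_I chi I f0 = 0.
Proof.
move=> hf0; rewrite /chi subset_sum.
case/boolP: [exists i, ~~ f0 i] => [/existsP[j hj]|].
  by apply: (prod_zero (j := j)); move: hj; case: (f0 j) => //= _; rewrite subrr.
rewrite negb_exists => /forallP H; case/eqP: hf0; apply/ffunP => j.
by move: (H j); rewrite negbK ffunE => ->.
Qed.

Lemma chi_orth f0 f :
  \sum_I chi I f0 * chi I f = (f0 == f)%:R * 2 ^+ k.
Proof.
rewrite /chi; under eq_bigr do rewrite -big_split /=.
rewrite subset_sum; case: (eqVneq f0 f) => [<-|nf].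
  rewrite mul1r (eq_bigr (fun _ => 2)) ?prodr_const ?card_ord // => i _.
  by rewrite sgn2.
rewrite mul0r.
case/boolP: [exists i, f0 i != f i] => [/existsP[j hj]|].
  apply: (prod_zero (j := j)); move: hj.
  by case: (f0 j); case: (f j) => //= _; rewrite /sgn ?mulr1 ?mul1r subrr.
rewrite negb_exists => /forallP H; case/eqP: nf; apply/ffunP => j.
by move: (H j); rewrite negbK => /eqP.
Qed.

Lemma fourier (g : {ffun 'I_k -> bool} -> algC) :
  (forall I : {set 'I_k}, \sum_f (1 - chi I f) * g f = 0) ->
  forall f0, f0 != [ffun => true] -> g f0 = 0.
Proof.
move=> h f0 hf0.
have key : \sum_f ((\sum_I chi I f0) - \sum_I chi I f0 * chi I f) * g f = 0.
  transitivity (\sum_(I : {set 'I_k}) chi I f0 * \sum_f (1 - chi I f) * g f);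
    last by apply: big1 => I _; rewrite h mulr0.
  symmetry; under eq_bigr do rewrite mulr_sumr.
  rewrite exchange_big /=; apply: eq_bigr => f _.
  rewrite -sumrB mulr_suml; apply: eq_bigr => I _.
  by rewrite mulrA mulrBr mulr1.
move: key; rewrite chi_sum0 //; under eq_bigr do rewrite chi_orth.
rewrite (bigD1 f0) //= big1 ?addr0 => [|f nf]; last first.
  by rewrite eq_sym (negPf nf) mul0r subrr mul0r.
rewrite eqxx mul1r sub0r mulNr => /eqP; rewrite oppr_eq0 mulf_eq0.
by rewrite (negPf (two_k_neq0 k)) /= => /eqP.
Qed.
End Fourier.
Lemma mup_prod (I : Type) (r : seq I) (p : I -> {poly algC}) x :
  (forall i, p i != 0) -> mup x (\prod_(i <- r) p i) = (\sum_(i <- r) mup x (p i))%N.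
Proof.
move=> hp; elim: r => [|i r IH]; first by rewrite !big_nil mupNroot // root1.
rewrite !big_cons mupM ?IH //.
apply: (big_ind (fun q : {poly algC} => q != 0)) => //; first exact: oner_neq0.
by move=> a b; exact: mulf_neq0.
Qed.

Lemma mup_sgnZ m (R : 'M[algC]_m) (s : algC) y : (s = 1 \/ s = -1) ->
  mup y (char_poly (s *: R)) = mup (s * y) (char_poly R).
Proof. by case=> ->; [rewrite scale1r mul1r | rewrite scaleN1r mulN1r mup_neg]. Qed.

Section Main.
Variables (k n : nat) (P : 'I_k -> 'M[algC]_n) (A : 'M[algC]_n).
Hypothesis hPc : forall i j, P i *m P j = P j *m P i.
Hypothesis hPP : forall i, P i *m P i = 1%:M.
Hypothesis hAP : forall i, A *m P i = P i *m A.

Lemma restrict_Q (I : {set 'I_k}) f :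
  restrict_mx (E P f) ((\prod_(i in I) P i) *m A) = chi I f *: restrict_mx (E P f) A.
Proof.
have EQ : E P f *m (\prod_(i in I) P i) = chi I f *: E P f.
  by rewrite mulmxE; apply: eig_prod => i; rewrite -mulmxE; exact: EP.
have /submxP[D hD] : (row_base (E P f) <= E P f)%MS by rewrite eq_row_base.
rewrite /restrict_mx; set W := pinvmx _; rewrite {1}hD (mulmxA (D *m E P f)) -(mulmxA D (E P f)) EQ -scalemxAr -hD -!scalemxAl.
by [].
Qed.

Lemma QA_comm (I : {set 'I_k}) i :
  ((\prod_(j in I) P j) *m A) *m P i = P i *m ((\prod_(j in I) P j) *m A).
Proof.
rewrite -mulmxA hAP !mulmxA; congr (_ *m _).
rewrite !mulmxE; symmetry; apply: commr_prod => j _.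
by rewrite /GRing.comm -!mulmxE hPc.
Qed.

Lemma spec_sum (B : 'M[algC]_n) : (forall i, B *m P i = P i *m B) -> forall y,
  spec_mult B y = (\sum_(f : {ffun 'I_k -> bool})
                     mup y (char_poly (restrict_mx (E P f) B)))%N.
Proof.
move=> hB y; rewrite /spec_mult (decomp hPc hPP hB) mup_prod // => f.
exact: monic_neq0 (char_poly_monic _).
Qed.

Definition cc f y := mup y (char_poly (restrict_mx (E P f) A)).

Hypothesis hspec : forall I : {set 'I_k}, I != set0 ->
     forall x, spec_mult A x = spec_mult ((\prod_(i in I) P i) *m A) x.

Lemma cc_sym f : f != [ffun => true] -> forall y, cc f y = cc f (- y).
Proof.
move=> hf y.
pose g f := ((cc f y)%:R - (cc f (- y))%:R : algC).
suff : g f = 0 by move/eqP; rewrite subr_eq0 eqr_nat => /eqP.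
apply: (fourier (g := g)) => // I.
have term : forall f, (1 - chi I f) * g f =
    2 * ((cc f y)%:R - (cc f (chi I f * y))%:R).
  move=> h; case: (chi_pm I h) => ->; first by rewrite mul1r !subrr mulr0 mul0r.
  by rewrite mulN1r opprK -mulr2n.
under eq_bigr do rewrite term.
rewrite -mulr_sumr sumrB -!natr_sum.
have [->|nI] := eqVneq I set0.
  have e0 : (\sum_(f : {ffun 'I_k -> bool}) cc f (chi set0 f * y) = \sum_f cc f y)%N.
    by apply: eq_bigr => h _; rewrite /chi big_set0 mul1r.
  by rewrite e0 subrr mulr0.
have := hspec nI y; rewrite (spec_sum hAP) (spec_sum (QA_comm I)).
have e1 : forall h, mup y (char_poly (restrict_mx (E P h) ((\prod_(i in I) P i) *m A)))
    = cc h (chi I h * y).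
  by move=> h; rewrite restrict_Q mup_sgnZ //; apply: chi_pm.
rewrite (eq_bigr _ (fun h _ => e1 h)).
by move=> <-; rewrite subrr mulr0.
Qed.
End Main.
Theorem proposition4p6 (k n : nat) (P : 'I_k -> 'M[algC]_n) (A : 'M[algC]_n) :
  (0 < k)%N ->
  (forall i j, P i *m P j = P j *m P i) ->
  (forall i, P i *m P i = 1%:M) ->
  (forall i, A *m P i = P i *m A) ->
  (forall I : {set 'I_k}, I != set0 ->
     forall x, spec_mult A x = spec_mult ((\prod_(i in I) P i) *m A) x) ->
  (forall eps : 'I_k -> algC, (forall i, eps i = 1 \/ eps i = -1) ->
     (exists i, eps i != 1) ->
     forall x, pos_roots (proj_eps P eps) A x
               = neg_roots (proj_eps P eps) A (- x)) /\
  (exists M : seq algC,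
     [/\ size M = (n - \rank (proj_eps P (fun _ => 1%R : algC)))%N,
         forall x, (count_mem x M <= spec_mult A x)%N &
         perm_eq M (map -%R M)]).
Proof.
move=> k0 hPc hPP hAP hspec.
have sym := cc_sym hPc hPP hAP hspec.
pose ft := [ffun => true] : {ffun 'I_k -> bool}.
split.
  move=> eps heps [j hj] x.
  pose f := [ffun i => eps i == 1].
  have ef : proj_eps P eps = E P f.
    rewrite /E /proj_eps; apply: eq_bigr => i _; rewrite ffunE /sgn.
    case: (heps i) => e; rewrite e ?eqxx //.
    by case: eqP => // ->.
  have hf : f != ft.
    by apply/negP => /eqP /ffunP /(_ j); rewrite !ffunE (negPf hj).
  rewrite /pos_roots /neg_roots ef oppr_lt0; case: ifP => // _.
  exact: sym.
pose rts f := sval (closed_field_poly_normal (char_poly (restrict_mx (E P f) A))).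
have hr : forall f, char_poly (restrict_mx (E P f) A) = \prod_(z <- rts f) ('X - z%:P).
  move=> f; rewrite /rts; case: (closed_field_poly_normal _) => r /= hr.
  by rewrite {1}hr (monicP (char_poly_monic _)) scale1r.
have cnt : forall f y, count_mem y (rts f) = cc P A f y.
  by move=> f y; rewrite /cc hr mu_prod_XsubC.
have sz : forall f, size (rts f) = \rank (E P f).
  move=> f; have := size_char_poly (restrict_mx (E P f) A).
  by rewrite hr size_prod_XsubC => -[].
set s := [seq f <- index_enum {ffun 'I_k -> bool} | f != ft].
exists (flatten (map rts s)).
have cntM : forall y, count_mem y (flatten (map rts s)) = (\sum_(f | f != ft) cc P A f y)%N.
  move=> y; rewrite count_flatten sumnE !big_map big_filter.
  by apply: eq_bigr => f _; exact: cnt.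
split.
- have e1 : proj_eps P (fun _ => 1) = E P ft.
    by rewrite /E /proj_eps; apply: eq_bigr => i _; rewrite ffunE.
  rewrite e1 size_flatten /shape sumnE !big_map big_filter.
  have := rank_sum hPc hPP; rewrite (bigD1 ft) //= => hn.
  rewrite -[X in _ = (X - _)%N]hn addKn.
  by apply: eq_bigr => f _; exact: sz.
- move=> y; rewrite cntM (spec_sum hPc hPP hAP) [X in (_ <= X)%N](bigD1 ft) //=.
  exact: leq_addl.
- rewrite /perm_eq; apply/allP => y _; apply/eqP.
  rewrite count_map.
  have -> : count (preim -%R (pred1 y)) (flatten (map rts s)) =
            count_mem (- y) (flatten (map rts s)).
    by apply: eq_count => z /=; rewrite eqr_oppLR.
  rewrite !cntM; apply: eq_bigr => f hf; exact: sym.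
Qed.
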